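(* Let $D$ be a non-commutative division ring with center $F$ and let $M$ be an irreducible locally solvable maximal subgroup of $D^*$. If $M$ is metabelian, then: (i) $M$ contains a unique maximal abelian normal subgroup $A$, and it satisfies $F^*\subsetneq A$ and $M'\le A$; (ii) $K=A\cup\{0\}$ is a maximal subfield of $D$.
   Context: $D^*$ is the multiplicative group of $D$; maximal subgroup = proper subgroup maximal among proper subgroups. A subgroup $G\le D^*$ is irreducible if the division subring $F(G)$ generated by $F\cup G$ equals $D$. Locally solvable: every finitely generated subgroup solvable. Metabelian: the derived subgroup $M'$ is abelian. A maximal abelian normal subgroup is an abelian normal subgroup not properly contained in another abelian normal subgroup. *)

(* Defs.v *)
(* A division ring D is modelled as a unitRingType (nontrivial
   ring with computable inverses) in which every nonzero element is a unit.
   Subsets of D (possibly infinite) are predicates D -> Prop. *)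
From mathcomp Require Import all_boot all_algebra.
Set Implicit Arguments. Unset Strict Implicit. Unset Printing Implicit Defensive.
Import GRing.Theory.
Local Open Scope ring_scope.

Section Defs.
Variable D : unitRingType.

Definition is_division_ring : Prop := forall x : D, x != 0 -> x \is a GRing.unit.

Definition dsubset (A B : D -> Prop) : Prop := forall x, A x -> B x.
Definition seteq (A B : D -> Prop) : Prop := forall x, A x <-> B x.

Definition center : D -> Prop := fun x => forall y, x * y = y * x.
Definition units_set : D -> Prop := fun x => x != 0.
Definition center_units : D -> Prop := fun x => center x /\ x != 0.

Definition is_subgroup (G : D -> Prop) : Prop :=
  [/\ G 1, (forall x, G x -> x != 0),
      (forall x y, G x -> G y -> G (x * y)) & (forall x, G x -> G x^-1)].

Definition gen_subgroup (S : D -> Prop) : D -> Prop :=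
  fun x => forall H, is_subgroup H -> dsubset S H -> H x.

Definition commutator (x y : D) : D := x^-1 * y^-1 * x * y.

Definition derived_subgroup (G : D -> Prop) : D -> Prop :=
  gen_subgroup (fun z => exists x y, [/\ G x, G y & z = commutator x y]).

Definition derived_series (G : D -> Prop) (n : nat) : D -> Prop :=
  iter n derived_subgroup G.

Definition solvable_grp (G : D -> Prop) : Prop :=
  exists n, dsubset (derived_series G n) (fun x => x = 1).

Definition locally_solvable (G : D -> Prop) : Prop :=
  forall s : seq D, (forall x, x \in s -> G x) ->
    solvable_grp (gen_subgroup (fun x => x \in s)).

Definition abelian_set (G : D -> Prop) : Prop :=
  forall x y, G x -> G y -> x * y = y * x.

Definition metabelian (M : D -> Prop) : Prop := abelian_set (derived_subgroup M).

Definition normal_sub (N M : D -> Prop) : Prop :=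
  [/\ is_subgroup N, dsubset N M & forall x m, N x -> M m -> N (m^-1 * x * m)].

Definition maximal_subgroup (M : D -> Prop) : Prop :=
  [/\ is_subgroup M, (exists x, x != 0 /\ ~ M x) &
      forall H, is_subgroup H -> dsubset M H -> seteq H M \/ seteq H units_set].

Definition is_division_subring (S : D -> Prop) : Prop :=
  [/\ S 0, S 1, (forall x y, S x -> S y -> S (x - y)),
      (forall x y, S x -> S y -> S (x * y)) &
      (forall x, S x -> x != 0 -> S x^-1)].

Definition division_subring_gen (S : D -> Prop) : D -> Prop :=
  fun x => forall T, is_division_subring T -> dsubset S T -> T x.

Definition irreducible_sub (G : D -> Prop) : Prop :=
  seteq (division_subring_gen (fun x => center x \/ G x)) (fun _ => True).

Definition is_subfield (K : D -> Prop) : Prop :=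
  is_division_subring K /\ (forall x y, K x -> K y -> x * y = y * x).

Definition maximal_subfield (K : D -> Prop) : Prop :=
  is_subfield K /\ forall L, is_subfield L -> dsubset K L -> seteq L K.

Definition max_abelian_normal (A M : D -> Prop) : Prop :=
  [/\ normal_sub A M, abelian_set A &
      forall B, normal_sub B M -> abelian_set B -> dsubset A B -> seteq B A].

End Defs.

(* Main.v *)
Require Import Defs.
From mathcomp Require Import all_boot all_algebra.
From Stdlib Require Import Classical.
Import GRing.Theory.
Local Open Scope ring_scope.
Set Implicit Arguments. Unset Strict Implicit.


Definition cent (D : unitRingType) (T : D -> Prop) : D -> Prop :=
  fun z => forall t, T t -> z * t = t * z.

Lemma cent_sub (D : unitRingType) (hdiv : is_division_ring D) (T : D -> Prop) :
  is_division_subring (cent T).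
Proof.
split.
- by move=> t _; rewrite mul0r mulr0.
- by move=> t _; rewrite mul1r mulr1.
- by move=> x y hx hy t ht; rewrite mulrBl mulrBr hx // hy.
- by move=> x y hx hy t ht; rewrite -mulrA hy // mulrA hx // mulrA.
- move=> x hx x0 t ht; have u := hdiv x x0.
  rewrite -[LHS]mulr1 -(mulrV u) mulrA -(mulrA x^-1) -(hx t ht) mulrA mulVr // mul1r.
  done.
Qed.

Lemma zmod_aux (V : zmodType) (a b c d : V) : a + d = b + c -> a - b = c - d.
Proof. by move=> h; apply/eqP; rewrite subr_eq addrAC [c + b]addrC -h addrK. Qed.

Lemma key_comm (D : unitRingType) (hdiv : is_division_ring D) (x y : D) :
  x != 0 -> y != 0 -> 1 + y != 0 ->
  commutator x y * x = x * commutator x y ->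
  commutator x (1 + y) * x = x * commutator x (1 + y) -> x * y = y * x.
Proof.
move=> x0 y0 y10.
have ux := hdiv x x0; have uy := hdiv y y0; have uy1 := hdiv _ y10.
set c1 := commutator x y; set c2 := commutator x (1 + y).
move=> h1 h2.
have e1 : x * y = y * x * c1.
  by rewrite /c1 /commutator !mulrA mulrK // mulrV // mul1r.
have e2 : x * (1 + y) = (1 + y) * x * c2.
  by rewrite /c2 /commutator !mulrA mulrK // mulrV // mul1r.
have e3 : x * (1 - c2) = y * x * (c2 - c1).
  move: e2; rewrite mulrDr mulr1 e1 !mulrDl mul1r => e2.
  rewrite mulrBr mulr1 mulrBr; apply: zmod_aux.
  by rewrite e2.
have C := cent_sub hdiv (fun t => t = x).
case: C => C0 C1 CB CM CV.
have cx1 : cent (fun t => t = x) c1 by move=> t ->.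
have cx2 : cent (fun t => t = x) c2 by move=> t ->.
case: (eqVneq c2 c1) => [e|ne].
  move: e3; rewrite e subrr mulr0 -(mulr0 x) => /(mulrI ux) /eqP.
  rewrite subr_eq0 => /eqP h; by rewrite e1 -h mulr1.
have ud : (c2 - c1) \is a GRing.unit by apply: hdiv; rewrite subr_eq0.
have cd : cent (fun t => t = x) ((1 - c2) * (c2 - c1)^-1).
  apply: CM; first by apply: CB.
  by apply: CV; [apply: CB | rewrite subr_eq0].
have e4 : y * x = (1 - c2) * (c2 - c1)^-1 * x.
  by rewrite (cd x erefl) mulrA e3 mulrK.
have ey := mulIr ux e4.
by rewrite ey cd.
Qed.



Lemma gen_sub (D : unitRingType) (S : D -> Prop) :
  is_division_subring (division_subring_gen S).
Proof.
split.
- by move=> T [].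
- by move=> T [].
- by move=> x y hx hy T hT hS; case: (hT) => _ _ hB _ _; apply: hB; [apply: hx|apply: hy].
- by move=> x y hx hy T hT hS; case: (hT) => _ _ _ hM _; apply: hM; [apply: hx|apply: hy].
- by move=> x hx x0 T hT hS; case: (hT) => _ _ _ _ hV; apply: hV => //; apply: hx.
Qed.

Lemma gen_incl (D : unitRingType) (S : D -> Prop) x : S x -> division_subring_gen S x.
Proof. by move=> hx T _ h; apply: h. Qed.

Lemma gen_comm (D : unitRingType) (hdiv : is_division_ring D) (S : D -> Prop) :
  (forall a b, S a -> S b -> a * b = b * a) ->
  forall a b, division_subring_gen S a -> division_subring_gen S b -> a * b = b * a.
Proof.
move=> hS a b ha hb.
have h1 : cent S a by apply: ha; [apply: cent_sub | move=> s hs t ht; apply: hS].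
have h2 : cent (fun t => t = a) b.
  apply: hb; first by apply: cent_sub.
  by move=> s hs t ->; rewrite (h1 s hs).
by rewrite (h2 a erefl).
Qed.

Lemma cbh (D : unitRingType) (hdiv : is_division_ring D) (E : D -> Prop) :
  is_division_subring E -> (forall y e, y != 0 -> E e -> E (y^-1 * e * y)) ->
  (forall d, E d) \/ (forall e, E e -> center e).
Proof.
move=> sE nE; case: (sE) => E0 E1 EB EM EV.
case: (classic (exists b, ~ E b)) => [[b nb]|h]; last first.
  by left => d; apply: NNPP => nd; apply: h; exists d.
right.
have key : forall a c, E a -> ~ E c -> a * c = c * a.
  move=> a c ha hc.
  have c0 : c != 0 by apply/eqP => e; apply: hc; rewrite e.
  have c10 : 1 + c != 0.
    apply/eqP => e; apply: hc; have -> : c = 0 - 1 by rewrite -e [1 + c]addrC addrK.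
    exact: EB.
  have uc := hdiv c c0; have uc1 := hdiv _ c10.
  set a1 := c^-1 * a * c; set a2 := (1 + c)^-1 * a * (1 + c).
  have ha1 : E a1 by apply: nE.
  have ha2 : E a2 by apply: nE.
  have e1 : a * c = c * a1 by rewrite /a1 !mulrA mulrV // mul1r.
  have e2 : a * (1 + c) = (1 + c) * a2 by rewrite /a2 !mulrA mulrV // mul1r.
  have e3 : a - a2 = c * (a2 - a1).
    rewrite mulrBr; apply: zmod_aux.
    by move: e2; rewrite mulrDr mulrDl mulr1 mul1r e1.
  case: (eqVneq a2 a1) => [e|ne].
    move: e3; rewrite e subrr mulr0 => /eqP; rewrite subr_eq0 => /eqP e4.
    by move: e2; rewrite e -e4 mulrDr mulrDl mulr1 mul1r => /addrI.
  exfalso; apply: hc.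
  have -> : c = (a - a2) * (a2 - a1)^-1.
    by rewrite e3 mulrK //; apply: hdiv; rewrite subr_eq0.
  apply: EM; first by apply: EB.
  by apply: EV; [apply: EB | rewrite subr_eq0].
move=> e he y.
case: (classic (E y)) => hy; last by apply: key.
have nby : ~ E (b + y).
  move=> h; apply: nb; have -> : b = (b + y) - y by rewrite addrK.
  exact: EB.
have := key e _ he nby; rewrite mulrDr mulrDl (key e b he nb).
by move/addrI.
Qed.



Lemma nz_mul (D : unitRingType) (hdiv : is_division_ring D) (x y : D) :
  x != 0 -> y != 0 -> x * y != 0.
Proof.
move=> x0 y0; apply/eqP => h; move/eqP: x0; apply.
by rewrite -(mulrK (hdiv y y0) x) h mul0r.
Qed.

Lemma conj_sub (D : unitRingType) (hdiv : is_division_ring D) (E : D -> Prop) m :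
  m != 0 -> is_division_subring E -> is_division_subring (fun e => E (m^-1 * e * m)).
Proof.
move=> m0 [E0 E1 EB EM EV]; have um := hdiv m m0; split.
- by rewrite mulr0 mul0r.
- by rewrite mulr1 mulVr.
- by move=> a b ha hb; rewrite mulrBr mulrBl; apply: EB.
- move=> a b ha hb.
  have -> : m^-1 * (a * b) * m = (m^-1 * a * m) * (m^-1 * b * m) by rewrite !mulrA mulrK.
  by apply: EM.
- move=> a ha a0; have ua := hdiv a a0.
  have -> : m^-1 * a^-1 * m = (m^-1 * a * m)^-1.
    rewrite invrM ?unitrMr ?unitrV // invrM ?unitrV // invrK mulrA.
    done.
  apply: EV => //; apply: nz_mul => //; apply: nz_mul => //; by rewrite invr_eq0.
Qed.

Unset Implicit Arguments. Set Strict Implicit.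

Theorem theorem2p3 (D : unitRingType) (hdiv : is_division_ring D)
    (hnc : exists x y : D, x * y != y * x)
    (M : D -> Prop) (hmax : maximal_subgroup M) (hirr : irreducible_sub M)
    (hls : locally_solvable M) (hmeta : metabelian M) :
  exists A : D -> Prop,
    [/\ max_abelian_normal A M,
        (forall B, max_abelian_normal B M -> seteq B A),
        dsubset (center_units (D:=D)) A /\ (exists a, A a /\ ~ center a),
        dsubset (derived_subgroup M) A &
        maximal_subfield (fun x => A x \/ x = 0)].
Proof.
case: hmax => Msub _ Mmax; case: (Msub) => M1 Mnz MM MV.
set Md := derived_subgroup M.
have comm_Md : forall a b, M a -> M b -> Md (commutator a b).
  by move=> a b ha hb H _ hH; apply: hH; exists a, b.
have Md_M : forall z, Md z -> M z.
  move=> z hz; apply: hz => // _ [a [b [ha hb ->]]].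
  by rewrite /commutator; apply: (MM) => //; apply: (MM) => //; apply: (MM) => //; apply: (MV).
have Md_nz : forall z, Md z -> z != 0 by move=> z /Md_M /Mnz.
have Md_norm : forall m z, M m -> Md z -> Md (m^-1 * z * m).
  move=> m z hm hz H hH hc.
  have um := hdiv m (Mnz m hm).
  case: hH => H1 Hnz HM HV.
  apply: (hz (fun y => H (m^-1 * y * m))).
  - split.
    + by rewrite mulr1 mulVr.
    + move=> y hy; apply/eqP => y0; move: (Hnz _ hy); by rewrite y0 mulr0 mul0r eqxx.
    + move=> a b ha hb.
      have -> : m^-1 * (a * b) * m = (m^-1 * a * m) * (m^-1 * b * m) by rewrite !mulrA mulrK.
      by apply: (HM).
    + move=> a ha.
      have a0 : a != 0.
        by apply/eqP => a0; move: (Hnz _ ha); rewrite a0 mulr0 mul0r eqxx.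
      have ua := hdiv a a0.
      have -> : m^-1 * a^-1 * m = (m^-1 * a * m)^-1.
        rewrite invrM ?unitrMr ?unitrV // invrM ?unitrV // invrK mulrA.
        done.
      by apply: (HV).
  - move=> _ [a [b [ha hb ->]]].
    have -> : m^-1 * commutator a b * m = commutator (m^-1 * a * m) (m^-1 * b * m).
      rewrite /commutator.
      rewrite invrM ?unitrMr ?unitrV ?(hdiv a (Mnz a ha)) // invrM ?unitrV ?(hdiv a (Mnz a ha)) // invrK.
      rewrite invrM ?unitrMr ?unitrV ?(hdiv b (Mnz b hb)) // invrM ?unitrV ?(hdiv b (Mnz b hb)) // invrK.
      by rewrite !mulrA !mulrK.
    apply: hc; exists (m^-1 * a * m), (m^-1 * b * m); split => //.
      by apply: (MM) => //; apply: (MM) => //; apply: (MV).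
    by apply: (MM) => //; apply: (MM) => //; apply: (MV).
have center_sub : is_division_subring (center (D:=D)).
  have [C0 C1 CB CM CV] := cent_sub hdiv (fun _ : D => True).
  split.
  - by move=> y; rewrite mul0r mulr0.
  - by move=> y; rewrite mul1r mulr1.
  - by move=> a b ha hb y; apply: (CB a b (fun t _ => ha t) (fun t _ => hb t) y I).
  - by move=> a b ha hb y; apply: (CM a b (fun t _ => ha t) (fun t _ => hb t) y I).
  - by move=> a ha a0 y; apply: (CV a (fun t _ => ha t) a0 y I).
have [x [Mx nFx xc]] : exists x, [/\ M x, ~ center x & forall z, Md z -> x * z = z * x].
  case: (classic (exists z, Md z /\ ~ center z)) => [[z [hz nz]]|h].
    by exists z; split => //; [apply: Md_M | move=> t ht; apply: hmeta].
  case: (classic (exists x, M x /\ ~ center x)) => [[x [hx nx]]|h2].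
    exists x; split => // z hz.
    case: (classic (center z)) => [cz|nz]; first by rewrite cz.
    by exfalso; apply: h; exists z.
  exfalso; case: hnc => a [b]; apply/negP; rewrite negbK; apply/eqP.
  have ca : center a.
    have := proj2 (hirr a) I; apply => //.
    move=> y [//|hy]; apply: NNPP => ny; apply: h2; by exists y.
  by apply: ca.
have x0 : x != 0 := Mnz x Mx.
set S := fun z => center z \/ Md z \/ z = x.
set L := division_subring_gen S.
have Lsub : is_division_subring L := gen_sub S.
have Lcomm : forall a b, L a -> L b -> a * b = b * a.
  apply: gen_comm => // a b [ca|[ha|->]] [cb|[hb|->]] //;
    try (by apply: ca); try (by symmetry; apply: cb).
  - by apply: hmeta.
  - by symmetry; apply: xc.
  - by apply: xc.
have Lx : L x by apply: gen_incl; right; right.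
have LMd : forall z, Md z -> L z by move=> z hz; apply: gen_incl; right; left.
have Lnorm : forall m l, M m -> L l -> L (m^-1 * l * m).
  move=> m l hm hl; have m0 := Mnz m hm; have um := hdiv m m0.
  apply: (hl (fun e => L (m^-1 * e * m))); first by apply: conj_sub.
  move=> z [cz|[hz|->]].
  - by rewrite -mulrA (cz m) mulrA mulVr // mul1r; apply: gen_incl; left.
  - by apply: LMd; apply: Md_norm.
  - have -> : m^-1 * x * m = x * commutator x m.
      by rewrite /commutator !mulrA mulrV ?(hdiv x x0) // mul1r.
    case: Lsub => _ _ _ LM _; apply: LM => //; apply: LMd; exact: comm_Md.
set C := cent L.
have Csub : is_division_subring C := cent_sub hdiv L.
have LC : forall l, L l -> C l by move=> l hl t ht; apply: Lcomm.
have Cadd : forall a b, C a -> C b -> C (a + b).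
  by move=> a b ha hb t ht; rewrite mulrDl mulrDr ha // hb.
have Cnorm : forall m c, M m -> C c -> C (m^-1 * c * m).
  move=> m c hm hc t ht; have um := hdiv m (Mnz m hm).
  set t' := m * t * m^-1.
  have ht' : L t' by rewrite /t' -{1}(invrK m); apply: Lnorm => //; apply: (MV).
  have e1 : (m^-1 * c * m) * t = m^-1 * (c * t') * m by rewrite /t' !mulrA mulrVK.
  have e2 : t * (m^-1 * c * m) = m^-1 * (t' * c) * m.
    by rewrite /t' !mulrA mulVr // mul1r.
  by rewrite e1 e2 hc.
have CinM : forall c, C c -> c != 0 -> M c.
  move=> c hc c0.
  set H := fun y => exists c m, [/\ C c, c != 0, M m & y = c * m].
  have Hsub : is_subgroup H.
    split.
    - by exists 1, 1; split => //; [by apply: LC; case: Lsub | apply: oner_neq0 | rewrite mulr1].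
    - move=> y [c1 [m [hc1 c10 hm ->]]]; apply: (nz_mul hdiv) => //; exact: Mnz.
    - move=> y z [c1 [m [hc1 c10 hm ->]]] [c2 [m2 [hc2 c20 hm2 ->]]].
      have um := hdiv m (Mnz m hm).
      exists (c1 * (m * c2 * m^-1)), (m * m2); split.
      + case: Csub => _ _ _ CM _; apply: CM => //.
        rewrite -{1}(invrK m); apply: Cnorm => //; exact: (MV _ hm).
      + apply: (nz_mul hdiv) => //; apply: (nz_mul hdiv) => //; [apply: (nz_mul hdiv) => //; exact: Mnz|].
        by rewrite invr_eq0; exact: Mnz.
      + by apply: (MM).
      + by rewrite !mulrA mulrVK.
    - move=> y [c1 [m [hc1 c10 hm ->]]].
      have um := hdiv m (Mnz m hm); have uc := hdiv c1 c10.
      exists (m^-1 * c1^-1 * m), m^-1; split.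
      + apply: Cnorm => //; case: Csub => _ _ _ _ CV; exact: CV.
      + apply: (nz_mul hdiv) => //; [apply: (nz_mul hdiv) => //|]; rewrite ?invr_eq0 //; exact: Mnz.
      + by apply: (MV).
      + by rewrite invrM // mulrK.
  have HM : dsubset M H.
    move=> m hm; exists 1, m; split => //; [by apply: LC; case: Lsub | apply: oner_neq0 | by rewrite mul1r].
  case: (Mmax H Hsub HM) => [eq|eq].
    by apply/(eq c); exists c, 1; split => //; rewrite mulr1.
  exfalso.
  have := cbh hdiv Csub; case.
  - move=> y e y0 he; have [c1 [m [hc1 c10 hm ey]]] := proj2 (eq y) y0.
    have um := hdiv m (Mnz m hm); have uc := hdiv c1 c10.
    have -> : y^-1 * e * y = m^-1 * (c1^-1 * e * c1) * m.
      by rewrite ey invrM // !mulrA.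
    apply: Cnorm => //; case: Csub => _ _ _ CM CV.
    by apply: (CM) => //; apply: (CM) => //; apply: (CV).
  - move=> hall; apply: nFx => y; symmetry; exact: (hall y x Lx).
  - move=> hC; apply: nFx; apply: hC; exact: LC.
have Ccomm : forall a b, C a -> C b -> a * b = b * a.
  move=> a b ha hb.
  case: (eqVneq a 0) => [->|a0]; first by rewrite mul0r mulr0.
  case: (eqVneq b 0) => [->|b0]; first by rewrite mul0r mulr0.
  case: (eqVneq (1 + b) 0) => [e|b10].
    have -> : b = -1 by apply/eqP; rewrite -subr_eq0 opprK addrC e.
    by rewrite mulrN1 mulN1r.
  have Ma := CinM a ha a0; have Mb := CinM b hb b0.
  have hb1 : C (1 + b) by apply: Cadd => //; apply: LC; case: Lsub.
  have Mb1 := CinM _ hb1 b10.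
  apply: (key_comm hdiv) => //.
  - symmetry; apply: ha; apply: LMd; exact: comm_Md.
  - symmetry; apply: ha; apply: LMd; exact: comm_Md.
set A := fun z => C z /\ z != 0.
have KC : forall z, (A z \/ z = 0) <-> C z.
  move=> z; split; first by case=> [[]|->] //; case: Csub.
  by move=> hz; case: (eqVneq z 0) => [->|z0]; [right | left].
have Asub : is_subgroup A.
  split.
  - by split; [apply: LC; case: Lsub | apply: oner_neq0].
  - by move=> y [].
  - move=> a b [ha a0] [hb b0]; split; last exact: (nz_mul hdiv).
    by case: Csub => _ _ _ CM _; apply: CM.
  - move=> a [ha a0]; split; last by rewrite invr_eq0.
    by case: Csub => _ _ _ _ CV; apply: CV.
have Anorm : normal_sub A M.
  split => //; first by move=> y [hy y0]; apply: CinM.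
  move=> y m [hy y0] hm; split; first by apply: Cnorm.
  apply: (nz_mul hdiv); [apply: (nz_mul hdiv) => //|]; rewrite ?invr_eq0; exact: Mnz.
have Aab : abelian_set A by move=> a b [ha _] [hb _]; apply: Ccomm.
have Amax : forall B, normal_sub B M -> abelian_set B -> dsubset A B -> seteq B A.
  move=> B [[_ Bnz _ _] _ _] Bab hAB y; split; last by apply: hAB.
  move=> hy; split; last exact: Bnz.
  move=> t ht; case: (eqVneq t 0) => [->|t0]; first by rewrite mul0r mulr0.
  by apply: Bab => //; apply: hAB; split => //; apply: LC.
exists A; split.
- by split.
- move=> B [[[B1 Bnz BMul BV] BM Bconj] Bab Bmax].
  suff hBA : dsubset B A.
    by move=> y; split => [|hy]; [apply: hBA | apply/(Bmax A Anorm Aab hBA y)].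
  move=> b hb; have b0 := Bnz b hb; have ub := hdiv b b0; split => //.
  suff key : forall a, A a -> a * b = b * a.
    move=> t ht; case: (eqVneq t 0) => [->|t0]; first by rewrite mul0r mulr0.
    by symmetry; apply: key; split => //; apply: LC.
  move=> a [ha a0]; have Ma := CinM a ha a0; have ua := hdiv a a0.
  case: (eqVneq (1 + a) 0) => [e|a10].
    have -> : a = -1 by apply/eqP; rewrite -subr_eq0 opprK addrC e.
    by rewrite mulrN1 mulN1r.
  have ha1 : C (1 + a) by apply: Cadd => //; apply: LC; case: Lsub.
  have Ma1 := CinM _ ha1 a10; have ua1 := hdiv _ a10.
  set w := commutator a b; set w' := commutator (1 + a) b.
  have hw : B w by apply: BMul => //; apply: Bconj => //; apply: BV.
  have hw' : B w' by apply: BMul => //; apply: Bconj => //; apply: BV.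
  have e1 : b^-1 * a * b = a * w by rewrite /w /commutator !mulrA mulrV // mul1r.
  have e2 : b^-1 * (1 + a) * b = (1 + a) * w' by rewrite /w' /commutator !mulrA mulrV // mul1r.
  have e3 : a * (w - w') = w' - 1.
    rewrite mulrBr; apply: zmod_aux.
    move: e2; rewrite mulrDr mulrDl mulr1 mulVr // e1 mulrDl mul1r.
    by rewrite addrC [w' + _]addrC.
  have ab : b^-1 * a * b = a -> a * b = b * a.
    by move=> h; rewrite -{2}h !mulrA mulrV // mul1r.
  case: (eqVneq w w') => [e|ne].
    apply: ab; move: e3; rewrite e subrr mulr0 => /eqP; rewrite eq_sym subr_eq0 => /eqP h.
    by rewrite e1 e h mulr1.
  have [c0 c1 cB cM cV] := cent_sub hdiv (fun t => t = b).
  have -> : a = (w' - 1) * (w - w')^-1.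
    by rewrite -e3 mulrK //; apply: hdiv; rewrite subr_eq0.
  apply: (cM _ _ _ _ b erefl).
    by apply: cB => // t ->; apply: Bab.
  apply: cV; first by apply: cB => // t ->; apply: Bab.
  by rewrite subr_eq0.
- split; first by move=> z [cz z0]; split => // t _; apply: cz.
  by exists x; split => //; split => //; apply: LC.
- by move=> z hz; split; [apply: LC; apply: LMd | apply: Md_nz].
- split.
  + split.
    * case: Csub => C0 C1 CB CM CV; split.
      - by apply/KC.
      - by apply/KC.
      - by move=> a b /KC ha /KC hb; apply/KC; apply: CB.
      - by move=> a b /KC ha /KC hb; apply/KC; apply: CM.
      - by move=> a /KC ha a0; apply/KC; apply: CV.
    * by move=> a b /KC ha /KC hb; apply: Ccomm.
  + move=> L2 [_ L2c] hKL y; split; last by apply: hKL.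
    move=> hy; apply/KC => t ht; apply: L2c => //; apply: hKL; apply/KC; exact: LC.
Qed.
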